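(* Let $\lambda>0$ and let $\mu$, $m$, $g$ be as described below. For all $t$ large enough there exists a unique $\hat\sigma_t\in[0,t)$ such that $(\log g)'(\lambda\hat\sigma_t)=\frac1{\lambda(t-\hat\sigma_t)}$. Furthermore, as $t\to\infty$, $\hat\sigma_t\to\infty$ and $\hat\sigma_t/t\to0$.
   Context: $\mu$ is a probability distribution on $(0,1)$, and $m(x)=-\log\mu((x,1))$ for $x\in[0,1)$ is twice differentiable on $[0,1)$ with $m'(x)>0$ and $m''(x)>0$ for all $x\in[0,1)$, $\lim_{x\uparrow1}m''(x)/(m'(x))^2=0$, there is $\varkappa>0$ with $\lim_{x\uparrow1}m''(x)m(x)x/(m'(x))^2=\varkappa$, and $\lim_{x\uparrow1}m(x)/m'(x)=0$. $g=m^{-1}:[0,\infty)\to[0,1)$ is the inverse function of $m$. *)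

(* Defs.v *)
From HB Require Import structures.
From mathcomp Require Import all_boot all_order all_algebra.
From mathcomp Require Import all_classical all_reals all_analysis.
Set Implicit Arguments. Unset Strict Implicit. Unset Printing Implicit Defensive.
Import Order.TTheory GRing.Theory Num.Theory.
Import numFieldNormedType.Exports.
Local Open Scope classical_set_scope.
Local Open Scope ring_scope.

Definition m_of_mu (R : realType) (mu : probability R R) (x : R) : R :=
  - ln (fine (mu `]x, 1[%classic)).

Definition has_deriv_on01 (R : realType) (f f' : R -> R) : Prop :=
  forall x : R, 0 <= x < 1 ->
    (fun h : R => (f (x + h) - f x) / h) @
      (within (fun h : R => h != 0 /\ 0 <= x + h < 1) (nbhs (0 : R)))
      --> f' x.

(* The equation (log g)'(lam * s) = 1 / (lam * (t - s)); log g is only defined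
   on (0, +oo) (since g 0 = 0), so we require lam * s > 0. *)
Definition logg_eq (R : realType) (g : R -> R) (lam t s : R) : Prop :=
  0 < lam * s /\
  is_derive (lam * s) 1 (fun y : R => ln (g y)) (1 / (lam * (t - s))).

(* Main.v *)
Require Import Defs.
From HB Require Import structures.
From mathcomp Require Import all_boot all_order all_algebra.
From mathcomp Require Import all_classical all_reals all_analysis.
From mathcomp Require Import ring lra.
Set Implicit Arguments. Unset Strict Implicit. Unset Printing Implicit Defensive.
Import Order.TTheory GRing.Theory Num.Theory.
Import numFieldNormedType.Exports.
Local Open Scope classical_set_scope.
Local Open Scope ring_scope.

Lemma D01 (R : realType) (f f' : R -> R) : has_deriv_on01 f f' ->
  forall x : R, 0 < x < 1 -> is_derive x (1:R) f (f' x).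
Proof.
move=> hf x /andP[x0 x1].
have H := hf x (andb_true_intro (conj (ltW x0) x1)).
have K : (fun h : R => h^-1 *: ((f \o shift x) (h *: 1) - f x)) @ 0^' --> f' x.
  have -> : (fun h : R => h^-1 *: ((f \o shift x) (h *: 1) - f x)) =
            (fun h : R => (f (x + h) - f x) / h).
    by apply/funext => h /=; rewrite -[h%:A]/(h * 1) mulr1 addrC -[h^-1 *: _]/(h^-1 * _) mulrC addrC [h + x]addrC.
  move=> P /H HP.
  have HP' : \forall h \near (0:R), (h != 0 /\ 0 <= x+h<1) -> P ((f (x + h) - f x) / h) := HP.
  suff HQ : \forall h \near (0:R), h != 0 -> P ((f (x + h) - f x) / h) by exact: HQ.
  have Hn : \forall h \near (0:R), 0 <= x + h < 1.
    have : (x + h) @[h --> (0:R)] --> x.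
      by rewrite -[in X in _ --> X](addr0 x); apply: cvgD; [exact: cvg_cst| exact: cvg_id].
    move=> /cvgrPdist_lt /(_ (Num.min x (1 - x))).
    rewrite lt_min x0 subr_gt0 x1 => /(_ isT).
    apply: filter_app; near=> h.
    rewrite lt_min => /andP[A B].
    move: A B; rewrite /= !ltr_norml => /andP[a1 a2] /andP[b1 b2].
    apply/andP; split; lra.
  move: HP' Hn; apply: filter_app2; near=> h => A B C; exact: A.
apply: DeriveDef; first exact: cvgP K.
exact: cvg_lim K.
Unshelve. all: by end_near. Qed.

Lemma cont_of_deriv (R : realType) (f : R -> R) (x d : R) :
  is_derive x 1 f d -> {for x, continuous f}.
Proof. by move=> [Hd _]; exact/differentiable_continuous/derivable1_diffP. Qed.

Lemma within_cont (R : realType) (f df : R -> R) (a b : R) :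
  (forall x, a <= x <= b -> is_derive x 1 f (df x)) ->
  {within `[a, b], continuous f}.
Proof.
move=> H; apply: continuous_in_subspaceT => x; rewrite inE /= in_itv /= => hx.
exact: cont_of_deriv (H x hx).
Qed.

Lemma incr01 (R : realType) (f f' : R -> R) : has_deriv_on01 f f' ->
  (forall x : R, 0 <= x < 1 -> 0 < f' x) ->
  forall a b : R, 0 < a -> a < b -> b < 1 -> f a < f b.
Proof.
move=> hf hp a b a0 ab b1.
have D x : a <= x <= b -> is_derive x 1 f (f' x).
  move=> /andP[h1 h2]; apply: D01 => //; apply/andP; split; lra.
have [c] : exists2 c, c \in `]a, b[ & f b - f a = f' c * (b - a).
  apply: (MVT ab) (within_cont D) => x; rewrite in_itv /= => /andP[h1 h2].
  apply: D; apply/andP; split; lra.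
rewrite in_itv /= => /andP[c1 c2] E.
rewrite -subr_gt0 E; apply: mulr_gt0; last by rewrite subr_gt0.
apply: hp; apply/andP; split; lra.
Qed.

Theorem lemma8 (R : realType) (mu : probability R R) (m1 m2 g : R -> R)
  (kappa lam : R) :
  mu (`]0, 1[%classic : set R) = 1%E ->
  has_deriv_on01 (m_of_mu mu) m1 ->
  has_deriv_on01 m1 m2 ->
  (forall x : R, 0 <= x < 1 -> 0 < m1 x) ->
  (forall x : R, 0 <= x < 1 -> 0 < m2 x) ->
  m2 x / (m1 x) ^+ 2 @[x --> 1^'-] --> 0 ->
  0 < kappa ->
  m2 x * m_of_mu mu x * x / (m1 x) ^+ 2 @[x --> 1^'-] --> kappa ->
  m_of_mu mu x / m1 x @[x --> 1^'-] --> 0 ->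
  (forall y : R, 0 <= y -> 0 <= g y < 1 /\ m_of_mu mu (g y) = y) ->
  0 < lam ->
  (exists T : R, forall t : R, T <= t ->
     exists! s : R, (0 <= s < t) /\ logg_eq g lam t s) /\
  (forall sig : R -> R,
     (\forall t \near +oo, 0 <= sig t < t /\ logg_eq g lam t (sig t)) ->
     sig t @[t --> +oo] --> +oo /\ sig t / t @[t --> +oo] --> 0).
Proof.
move=> Hmu Hm Hm1 Hp1 Hp2 _ _ _ Hlim Hg lam0.
set m := m_of_mu mu in Hm Hlim Hg.
have m0 : m 0 = 0 by rewrite /m /m_of_mu Hmu /= ln1 oppr0.
have mincr : forall a b : R, 0 < a -> a < b -> b < 1 -> m a < m b := incr01 Hm Hp1.
have m1incr : forall a b : R, 0 < a -> a < b -> b < 1 -> m1 a < m1 b := incr01 Hm1 Hp2.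
have gpos (y : R) : 0 < y -> 0 < g y < 1.
  move=> y0; have [/andP[a b] E] := Hg y (ltW y0).
  rewrite b andbT lt_neqAle a andbT; apply/eqP => E0.
  by move: E; rewrite -E0 m0 => E1; rewrite E1 ltxx in y0.
have gincr (y z : R) : 0 < y -> y < z -> g y < g z.
  move=> y0 yz; have z0 : 0 < z by lra.
  have /andP[a1 a2] := gpos y y0; have /andP[b1 b2] := gpos z z0.
  rewrite ltNge; apply/negP; rewrite le_eqVlt => /orP[/eqP E|E].
    by move: yz; rewrite -(Hg y (ltW y0)).2 -(Hg z (ltW z0)).2 E ltxx.
  have := mincr _ _ b1 E a2; rewrite (Hg y (ltW y0)).2 (Hg z (ltW z0)).2; lra.
have mD (x : R) : 0 < x < 1 -> is_derive x 1 m (m1 x) := @D01 _ _ _ Hm x.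
have m1D (x : R) : 0 < x < 1 -> is_derive x 1 m1 (m2 x) := @D01 _ _ _ Hm1 x.
have gD (y : R) : 0 < y -> is_derive y 1 g (m1 (g y))^-1.
  move=> y0; have /andP[gy0 gy1] := gpos y y0; have E := (Hg y (ltW y0)).2.
  have N01 : \forall x \near g y, 0 < x < 1.
    have := @near_in_itvoo R 0 1 (g y); rewrite in_itv /= gy0 gy1 => /(_ isT).
    by apply: filterS => x; rewrite in_itv.
  have := @is_derive_inverse R m g (m1 (g y)) (g y) _ _ (mD _ (gpos y y0)) _.
  rewrite E; apply.
  - have mc : {for g y, continuous m} := cont_of_deriv (mD _ (gpos y y0)).
    have Hp : \forall x \near g y, 0 < m x.
      have := @cvgr_gt R R (nbhs (g y)) _ m (m (g y)) mc 0; rewrite E; exact.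
    move: N01 Hp; apply: filter_app2; near=> x => /andP[x0 x1] mx0.
    have [/andP[_ _] E2] := Hg (m x) (ltW mx0).
    have /andP[c0 c1] := gpos _ mx0.
    apply/eqP; rewrite eq_le; apply/andP; split; rewrite leNgt; apply/negP => H.
      by have := mincr _ _ x0 H c1; rewrite E2 ltxx.
    by have := mincr _ _ c0 H x1; rewrite E2 ltxx.
  - move: N01; apply: filter_app; near=> x => hx.
    exact: cont_of_deriv (mD _ hx).
  - by apply: lt0r_neq0; apply: Hp1; rewrite ltW.
have lgD (y : R) : 0 < y -> is_derive y 1 (fun y => ln (g y)) ((g y)^-1 * (m1 (g y))^-1).
  move=> y0; have /andP[gy0 gy1] := gpos y y0.
  exact: (is_derive1_comp (is_derive1_ln gy0) (gD y y0)).
pose G (y : R) := g y * m1 (g y).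
have Gpos (y : R) : 0 < y -> 0 < G y.
  move=> y0; have /andP[gy0 gy1] := gpos y y0.
  by apply: mulr_gt0 => //; apply: Hp1; rewrite ltW.
have Gincr (y z : R) : 0 < y -> y < z -> G y < G z.
  move=> y0 yz; have z0 : 0 < z by lra.
  have /andP[a1 a2] := gpos y y0; have /andP[b1 b2] := gpos z z0.
  have gyz := gincr y z y0 yz.
  have := m1incr _ _ a1 gyz b2.
  have := Hp1 (g y) (andb_true_intro (conj (ltW a1) a2)).
  rewrite /G; nra.
have Gcont (y : R) : 0 < y -> {for y, continuous G}.
  move=> y0; have /andP[gy0 gy1] := gpos y y0.
  apply: continuousM; first exact: cont_of_deriv (gD y y0).
  apply: (@continuous_comp _ _ _ g m1); first exact: cont_of_deriv (gD y y0).
  exact: cont_of_deriv (m1D _ (gpos y y0)).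
pose h (s : R) := s + G (lam * s) / lam.
have hcont (s : R) : 0 < s -> {for s, continuous h}.
  move=> s0; apply: continuousD; first exact: cvg_id.
  apply: continuousM; last exact: cvg_cst.
  apply: (@continuous_comp _ _ _ (fun s => lam * s) G).
    by apply: continuousM; [exact: cvg_cst | exact: cvg_id].
  by apply: Gcont; apply: mulr_gt0.
have hincr (s u : R) : 0 < s -> s < u -> h s < h u.
  move=> s0 su; rewrite /h; have := Gincr (lam * s) (lam * u) (mulr_gt0 lam0 s0).
  rewrite ltr_pM2l // => /(_ su) H.
  have : G (lam * s) / lam < G (lam * u) / lam by rewrite ltr_pM2r ?invr_gt0.
  lra.
have hgt (s : R) : 0 < s -> s < h s.
  move=> s0; rewrite /h ltrDl; apply: divr_gt0 => //; apply: Gpos; exact: mulr_gt0.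
have key (t s : R) : 0 < s -> (logg_eq g lam t s <-> t = h s).
  move=> s0; have ls0 : 0 < lam * s by exact: mulr_gt0.
  have gpos' := Gpos _ ls0.
  split.
    move=> [_ [_ V1]]; case: (lgD _ ls0) => _ V2.
    rewrite V1 -invfM in V2.
    have : lam * (t - s) = G (lam * s) by rewrite /G; apply: invr_inj; rewrite -div1r.
    by move=> E; rewrite /h -E [lam * _]mulrC mulfK ?gt_eqF // addrC subrK.
  move=> ->; split => //.
  have -> : 1 / (lam * (h s - s)) = (g (lam * s))^-1 * (m1 (g (lam * s)))^-1.
    rewrite /h addrAC subrr add0r [lam * _]mulrC divfK ?gt_eqF // div1r /G invfM //.
  exact: lgD.
have growth (K : R) : 0 < K -> exists Y : R, 0 < Y /\ forall y, Y <= y -> K * y <= G y.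
  move=> K0.
  have e0 : 0 < (2 * K)^-1 by rewrite invr_gt0 mulr_gt0.
  move/cvgrPdist_lt : Hlim => /(_ _ e0).
  rewrite near_withinE => /nbhs_ballP [eta /= eta0 Hb].
  pose x0 := Num.max (1/2) (1 - eta/2).
  have x0a : 1/2 <= x0 by rewrite le_max lexx.
  have x0b : x0 < 1 by rewrite gt_max; apply/andP; split; lra.
  have Px0 (x : R) : x0 <= x < 1 -> m x / m1 x < (2 * K)^-1.
    move=> /andP[xa xb].
    have : ball (1:R) eta x.
      rewrite /ball /= ger0_norm ?subr_ge0 ?ltW //.
      have : 1 - eta/2 <= x0 by rewrite le_max lexx orbT.
      lra.
    move=> /Hb /(_ xb); rewrite sub0r normrN => H.
    exact: le_lt_trans (ler_norm _) H.
  exists (Num.max (m x0) 0 + 1); split.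
    have : 0 <= Num.max (m x0) 0 by rewrite le_max lexx orbT.
    lra.
  move=> y Hy.
  have y0 : 0 < y.
    have : 0 <= Num.max (m x0) 0 by rewrite le_max lexx orbT.
    lra.
  have /andP[gy0 gy1] := gpos y y0.
  have E := (Hg y (ltW y0)).2.
  have gx : x0 <= g y.
    rewrite leNgt; apply/negP => H.
    have := mincr _ _ gy0 H x0b; rewrite E.
    have : m x0 <= Num.max (m x0) 0 by rewrite le_max lexx.
    lra.
  have := Px0 (g y) (andb_true_intro (conj gx gy1)); rewrite E.
  have m1p : 0 < m1 (g y) by apply: Hp1; rewrite ltW.
  rewrite ltr_pdivrMr // ltr_pdivlMl ?mulr_gt0 // => H.
  rewrite /G; nra.
split.
  exists (h 1 + 1) => t Ht.
  have h1 := hgt 1 ltr01.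
  have t1 : 1 < t by lra.
  have t0 : 0 < t by lra.
  have [c] : exists2 c, c \in `[1, t] & h c = t.
    apply: IVT; first lra.
      apply: continuous_in_subspaceT => x; rewrite inE /= in_itv /= => /andP[x1 _].
      by apply: hcont; lra.
    have := hgt t t0.
    rewrite ge_min le_max => ht; apply/andP; split; apply/orP; [left|right]; lra.
  rewrite in_itv /= => /andP[c1 ct] hc.
  have c0 : 0 < c by lra.
  exists c; split.
    split; first by (apply/andP; split; have := hgt c c0; lra).
    by apply/(key t c c0).
  move=> s [/andP[s0 st] Hs].
  have sp : 0 < s by move: Hs.1; rewrite pmulr_rgt0.
  have hs := (key t s sp).1 Hs.
  apply/eqP; rewrite eq_le !leNgt; apply/andP; split; apply/negP => H.
    have := hincr s c sp H; lra.
  have := hincr c s c0 H; lra.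
move=> sig Hev.
have Hs : \forall t \near +oo, 0 < sig t /\ t = h (sig t).
  move: Hev; apply: filterS => t [/andP[a b] L].
  have sp : 0 < sig t by move: L.1; rewrite pmulr_rgt0.
  split => //; exact: (key t (sig t) sp).1 L.
have sinf : sig t @[t --> +oo] --> +oo.
  apply/cvgryPgt => A.
  pose M := Num.max A 1.
  have M0 : 0 < M by rewrite lt_max ltr01 orbT.
  have AM : A <= M by rewrite le_max lexx.
  have H2 : \forall t \near +oo, h M < t := nbhs_pinfty_gt (num_real _).
  move: Hs H2; apply: filter_app2; apply: filterE => t [sp E] Ht.
  suff : M < sig t by lra.
  rewrite ltNge; apply/negP; rewrite le_eqVlt => /orP[/eqP e|lt].
    by move: Ht; rewrite E e ltxx.
  have := hincr _ _ sp lt; lra.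
split => //.
apply/cvgrPdist_lt => e e0.
have ie0 : 0 < e^-1 by rewrite invr_gt0.
have [Y [Y0 HY]] := growth (e^-1) ie0.
move/cvgryPgt : sinf => /(_ (Y / lam)) H3.
move: Hs H3; apply: filter_app2; apply: filterE => t [sp E] Hst.
move: sp E Hst; set s := sig t => sp E Hst.
have Ys : Y <= lam * s by rewrite ltr_pdivrMr // mulrC in Hst; exact: ltW.
have HG := HY _ Ys.
set X := G (lam * s) / lam in E.
have hX : e^-1 * s <= X.
  by rewrite /X ler_pdivlMr // -mulrA [s * lam]mulrC.
have hX2 : s <= e * X.
  by rewrite -(ler_pM2l e0) mulrA mulfV ?gt_eqF // mul1r in hX.
have t0 : 0 < t by have := hgt s sp; rewrite -E; lra.
rewrite sub0r normrN ger0_norm ?divr_ge0 ?ltW // ltr_pdivrMr //.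
have E2 : t = s + X by [].
rewrite E2; nra.
Unshelve. all: by end_near. Qed.
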